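(* For $\Sigma(p_1,p_2,p_3)$ with $\frac1{p_1}+\frac1{p_2}+\frac1{p_3}<1$ and for $\Sigma(2,3,5)$, the coefficients satisfy $\lambda_0=1$, \[ \lambda_1=-\frac14\Bigl(\phi+P\Bigl(1-\frac1{p_1^2}-\frac1{p_2^2}-\frac1{p_3^2}\Bigr)\Bigr), \] \[ \lambda_2=\frac1{12}\Biggl(\frac{3\phi^2+12\phi-4}8+\frac{3P}4(\phi+2)\Bigl(1-\sum_{j=1}^3\frac1{p_j^2}\Bigr)+\frac{P^2}8\Bigl(2\Bigl(1-\sum_{j=1}^3\frac1{p_j^4}\Bigr)+5\Bigl(1-\sum_{j=1}^3\frac1{p_j^2}\Bigr)^2\Bigr)\Biggr), \] where $\phi=\phi(p_1,p_2,p_3)$.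
   Context: $p_1,p_2,p_3$ pairwise coprime positive integers, $P=p_1p_2p_3$, $\phi=3-\frac1P+12(s(p_2p_3,p_1)+s(p_1p_3,p_2)+s(p_1p_2,p_3))$ with Dedekind sums $s(b,a)=\sum_{k=1}^{a-1}((k/a))((kb/a))$. The $\lambda_n$ are the coefficients of the formal power series $\tau_\infty=\sum_n\lambda_n(q-1)^n$ defined by: for $\sum1/p_j<1$, $q^{\phi/4-1/2}(q-1)\tau_\infty=\frac12\sum_{k\ge0}\frac{L(-2k,\chi_{2P}^{(1,1,1)})}{k!}(\frac{\log q}{4P})^k$, and for $\Sigma(2,3,5)$, $q^{121/120}(q-1)\tau_\infty=q^{1/120}+\frac12\sum_{k\ge0}\frac{L(-2k,\chi_{60}^{(1,1,1)})}{k!}(\frac{\log q}{120})^k$. Here $\chi_{2P}^{(1,1,1)}$ is the odd $2P$-periodic function with $\chi(n)=1$ if $n\equiv P(1+\sum_j\varepsilon_j/p_j)\pmod{2P}$ with signs of product $-1$, $-1$ if product $1$, $0$ otherwise ($\chi_{60}^{(1,1,1)}$ is $-1$ on $1,11,19,29$ and $+1$ on $31,41,49,59$ mod $60$); $L(-2k,\chi)=-\frac{(2P)^{2k}}{2k+1}\sum_{j=1}^{2P}\chi(j)B_{2k+1}(j/(2P))$, $B_n$ Bernoulli polynomials. *)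

(* Defs.v *)
From mathcomp Require Import all_boot all_order all_algebra.
Set Implicit Arguments. Unset Strict Implicit. Unset Printing Implicit Defensive.
Import Order.TTheory GRing.Theory Num.Theory.
Local Open Scope ring_scope.

(* ---------- formal power series in x = q - 1, as coefficient sequences ---------- *)
Definition fps := nat -> rat.
Definition fps_one : fps := fun n => (n == 0%N)%:R.
Definition fps_mul (f g : fps) : fps :=
  fun n => \sum_(i < n.+1) f i * g (n - i)%N.
Definition fps_pow (f : fps) (k : nat) : fps := iter k (fps_mul f) fps_one.
(* (q - 1) * f *)
Definition fps_shift (f : fps) : fps := fun n => if n is m.+1 then f m else 0.
(* q^a = (1 + x)^a  (binomial series), a rational *)
Definition qpow (a : rat) : fps :=
  fun n => (\prod_(i < n) (a - i%:R)) / (n`!)%:R.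
(* log q = log (1 + x) *)
Definition logq : fps :=
  fun n => if n is m.+1 then (-1) ^+ m / (m.+1)%:R else 0.
(* sum_k c_k g^k, for g with zero constant term (formal substitution):
   only k <= n contributes to the coefficient of x^n *)
Definition fps_subst (c : nat -> rat) (g : fps) : fps :=
  fun n => \sum_(k < n.+1) c k * fps_pow g k n.

Definition sawtooth (x : rat) : rat :=
  if x \is a Num.int then 0 else x - (Num.floor x)%:~R - 1 / 2.
Definition dedekind_sum (b a : nat) : rat :=
  \sum_(1 <= k < a) sawtooth (k%:R / a%:R) * sawtooth ((k * b)%:R / a%:R).

Definition PP (p1 p2 p3 : nat) : nat := (p1 * p2 * p3)%N.

Definition phi (p1 p2 p3 : nat) : rat :=
  3 - 1 / (PP p1 p2 p3)%:R
  + 12 * (dedekind_sum (p2 * p3) p1 + dedekind_sum (p1 * p3) p2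
          + dedekind_sum (p1 * p2) p3).

Definition sgnb (e : bool) : int := if e then 1 else -1.
(* P (1 + sum_j eps_j / p_j) = P + sum_j eps_j (P / p_j) *)
Definition chi_res (p1 p2 p3 : nat) (e1 e2 e3 : bool) : int :=
  (PP p1 p2 p3)%:Z + sgnb e1 * (PP p1 p2 p3 %/ p1)%N%:Z
  + sgnb e2 * (PP p1 p2 p3 %/ p2)%N%:Z + sgnb e3 * (PP p1 p2 p3 %/ p3)%N%:Z.
Definition chi_hit (p1 p2 p3 : nat) (s : int) (n : int) : bool :=
  [exists e1 : bool, exists e2 : bool, exists e3 : bool,
    (sgnb e1 * sgnb e2 * sgnb e3 == s) &&
    ((2 * PP p1 p2 p3)%N%:Z %| n - chi_res p1 p2 p3 e1 e2 e3)%Z].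
Definition chi (p1 p2 p3 : nat) (n : int) : rat :=
  if chi_hit p1 p2 p3 (-1) n then 1
  else if chi_hit p1 p2 p3 1 n then -1 else 0.

(* ---------- Bernoulli numbers (B_1 = -1/2) and polynomials ---------- *)
(* bern_seq n = [:: B_0; ...; B_n], via sum_{k=0}^{m} C(m+1,k) B_k = 0 (m >= 1) *)
Fixpoint bern_seq (n : nat) : seq rat :=
  match n with
  | 0 => [:: 1]
  | m.+1 => let s := bern_seq m in
      rcons s (- (m.+2)%:R^-1 * \sum_(k < m.+1) ('C(m.+2, k))%:R * nth 0 s k)
  end.
Definition bernoulli (n : nat) : rat := nth 0 (bern_seq n) n.
Definition bernpoly (n : nat) (x : rat) : rat :=
  \sum_(k < n.+1) ('C(n, k))%:R * bernoulli k * x ^+ (n - k).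

(* L(-2k, chi) = -(2P)^{2k}/(2k+1) sum_{j=1}^{2P} chi(j) B_{2k+1}(j/(2P)) *)
Definition Lneg (p1 p2 p3 : nat) (k : nat) : rat :=
  let N := (2 * PP p1 p2 p3)%N in
  - (N%:R ^+ (2 * k)) / (2 * k + 1)%N%:R *
    \sum_(1 <= j < N.+1) chi p1 p2 p3 j%:Z * bernpoly (2 * k + 1) (j%:R / N%:R).

(* ---------- the defining identities of tau_infty = sum_n lam n (q-1)^n ---------- *)
(* case sum 1/p_j < 1 :
   q^{phi/4-1/2} (q-1) tau = 1/2 sum_k L(-2k,chi)/k! (log q / (4P))^k *)
Definition is_tau_hyp (p1 p2 p3 : nat) (lam : fps) : Prop :=
  forall n : nat,
    fps_mul (qpow (phi p1 p2 p3 / 4 - 1 / 2)) (fps_shift lam) n =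
    fps_subst (fun k => 1 / 2 * Lneg p1 p2 p3 k / (k`!)%:R
                        / ((4 * PP p1 p2 p3)%N%:R ^+ k)) logq n.
(* case Sigma(2,3,5):
   q^{121/120} (q-1) tau = q^{1/120} + 1/2 sum_k L(-2k,chi_60)/k! (log q / 120)^k *)
Definition is_tau_235 (lam : fps) : Prop :=
  forall n : nat,
    fps_mul (qpow (121 / 120)) (fps_shift lam) n =
    qpow (1 / 120) n +
    fps_subst (fun k => 1 / 2 * Lneg 2 3 5 k / (k`!)%:R / (120 ^+ k)) logq n.

Definition lam_values (p1 p2 p3 : nat) (lam : fps) : Prop :=
  let P := (PP p1 p2 p3)%:R : rat in
  let ph := phi p1 p2 p3 in
  let S2 := 1 - 1 / (p1%:R ^+ 2) - 1 / (p2%:R ^+ 2) - 1 / (p3%:R ^+ 2) in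
  let S4 := 1 - 1 / (p1%:R ^+ 4) - 1 / (p2%:R ^+ 4) - 1 / (p3%:R ^+ 4) in
  [/\ lam 0%N = 1,
      lam 1%N = - (1 / 4) * (ph + P * S2)
    & lam 2%N = 1 / 12 * ((3 * ph ^+ 2 + 12 * ph - 4) / 8
                          + 3 * P / 4 * (ph + 2) * S2
                          + P ^+ 2 / 8 * (2 * S4 + 5 * S2 ^+ 2))].

(* Main.v *)
Require Import Defs.
From mathcomp Require Import all_boot all_order all_algebra.
From mathcomp Require Import ring lra zify.
Import Order.TTheory GRing.Theory Num.Theory.
Local Open Scope ring_scope.

Lemma mul0 f g : fps_mul f g 0 = f 0%N * g 0%N.
Proof. by rewrite /fps_mul big_ord_recr big_ord0 /= add0r. Qed.
Lemma mul1 f g : fps_mul f g 1 = f 0%N * g 1%N + f 1%N * g 0%N.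
Proof. by rewrite /fps_mul !big_ord_recr big_ord0 /= add0r. Qed.
Lemma mul2 f g : fps_mul f g 2 = f 0%N * g 2%N + f 1%N * g 1%N + f 2%N * g 0%N.
Proof. by rewrite /fps_mul !big_ord_recr big_ord0 /= add0r. Qed.
Lemma mul3 f g : fps_mul f g 3 = f 0%N * g 3%N + f 1%N * g 2%N + f 2%N * g 1%N + f 3%N * g 0%N.
Proof. by rewrite /fps_mul !big_ord_recr big_ord0 /= add0r. Qed.
Lemma powS f k : fps_pow f k.+1 = fps_mul f (fps_pow f k).
Proof. by []. Qed.
Lemma pow0 f n : fps_pow f 0 n = (n == 0%N)%:R.
Proof. by []. Qed.
Lemma lq0 : logq 0 = 0. Proof. by []. Qed.
Lemma lq1 : logq 1 = 1. Proof. rewrite /logq /= ?expr0 ?expr1 ?expr2; by by field. Qed.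
Lemma lq2 : logq 2 = -1/2. Proof. rewrite /logq /= ?expr0 ?expr1 ?expr2; by field. Qed.
Lemma lq3 : logq 3 = 1/3. Proof. rewrite /logq /= ?expr0 ?expr1 ?expr2; by field. Qed.

Lemma r_vals (c : nat -> rat) :
  [/\ fps_subst c logq 0 = c 0%N, fps_subst c logq 1 = c 1%N,
      fps_subst c logq 2 = - c 1%N / 2 + c 2%N &
      fps_subst c logq 3 = c 1%N / 3 - c 2%N + c 3%N].
Proof.
rewrite /fps_subst !big_ord_recr !big_ord0 /=.
rewrite !(mul0, mul1, mul2, mul3) /fps_one /= ?lq0 ?lq1 ?lq2 ?lq3.
change (1+1)%N with 2%N.
split; by field.
Qed.
Lemma q0 a : qpow a 0 = 1.
Proof. by rewrite /qpow big_ord0 divr1. Qed.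
Lemma q1 a : qpow a 1 = a.
Proof. rewrite /qpow big_ord_recr big_ord0 /= (_ : (1`! = 1)%N) //. by field. Qed.
Lemma q2 a : qpow a 2 = a * (a - 1) / 2.
Proof. rewrite /qpow !big_ord_recr big_ord0 /= (_ : (2`! = 2)%N) //. by field. Qed.

Fixpoint lamf (a : rat) (r : fps) (m : nat) : nat -> rat :=
  match m with
  | 0%N => fun _ => r 1%N
  | m'.+1 => fun j => if (j <= m')%N then lamf a r m' j
      else r m'.+2 - \sum_(i < m'.+1) qpow a i.+1 * lamf a r m' (m'.+1 - i.+1)%N
  end.

Lemma lamf_stable a r n j : (j <= n)%N -> lamf a r n j = lamf a r j j.
Proof.
elim: n => [|n IH] Hj.
  by move: Hj; rewrite leqn0 => /eqP ->.
case: (ltngtP j n.+1) Hj => // [Hlt|->] _; last by [].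
by rewrite /= -ltnS Hlt IH.
Qed.

Lemma lam_rec a r m : lamf a r m m =
  r m.+1 - \sum_(i < m) qpow a i.+1 * lamf a r (m - i.+1)%N (m - i.+1)%N.
Proof.
case: m => [|m]; first by rewrite big_ord0 subr0.
rewrite /= ltnn; congr (_ - _); apply: eq_bigr => i _.
by rewrite lamf_stable // subSS leq_subr.
Qed.

Lemma tau_exists a r : r 0%N = 0 ->
  exists lam : fps, forall n, fps_mul (qpow a) (fps_shift lam) n = r n.
Proof.
move=> r0; exists (fun n => lamf a r n n) => -[|m].
  by rewrite mul0 /= mulr0 r0.
rewrite /fps_mul big_ord_recr /= subnn mulr0 addr0.
rewrite (eq_bigr (fun i : 'I_m.+1 => qpow a i * lamf a r (m - i)%N (m - i)%N)); last first.
  by move=> i _; rewrite subSn // -ltnS.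
rewrite big_ord_recl /= q0 mul1r subn0 lam_rec subrK.
by [].
Qed.

Lemma tau_unique a r lam : (forall n, fps_mul (qpow a) (fps_shift lam) n = r n) ->
  [/\ lam 0%N = r 1%N, lam 1%N = r 2%N - a * lam 0%N &
      lam 2%N = r 3%N - a * lam 1%N - a * (a - 1) / 2 * lam 0%N].
Proof.
move=> H; have h1 := H 1%N; have h2 := H 2%N; have h3 := H 3%N.
move: h1 h2 h3; rewrite mul1 mul2 mul3 /fps_shift q0 q1 q2.
move=> <- <- <-; split; by ring.
Qed.
Lemma size_bern n : size (bern_seq n) = n.+1.
Proof. by elim: n => //= n IH; rewrite size_rcons IH. Qed.

Lemma nth_bern n k : (k <= n)%N -> nth 0 (bern_seq n) k = bernoulli k.
Proof.
elim: n => [|n IH]; first by rewrite leqn0 => /eqP ->.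
rewrite leq_eqVlt => /orP[/eqP ->|]; first by [].
rewrite ltnS => Hk /=; rewrite nth_rcons size_bern ltnS Hk; exact: IH.
Qed.

Lemma bern_rec m : bernoulli m.+1 =
  - (m.+2)%:R^-1 * \sum_(k < m.+1) ('C(m.+2, k))%:R * bernoulli k.
Proof.
rewrite /bernoulli /= nth_rcons size_bern ltnn eqxx.
congr (_ * _); apply: eq_bigr => k _; rewrite nth_bern //; exact: (ltn_ord k).
Qed.

Lemma B0 : bernoulli 0 = 1. Proof. by []. Qed.
Ltac bstep := rewrite bern_rec !big_ord_recr big_ord0 /=.
Lemma B1 : bernoulli 1 = -1/2.
Proof. bstep.
rewrite (_ : 'C(2,0) = 1)%N; last by [].
 rewrite ?B0. by field. Qed.
Lemma B2 : bernoulli 2 = 1/6.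
Proof. bstep.
rewrite (_ : 'C(3,0) = 1)%N; last by [].
 rewrite (_ : 'C(3,1) = 3)%N; last by [].
 rewrite ?B0 ?B1. by field. Qed.
Lemma B3 : bernoulli 3 = 0.
Proof. bstep.
rewrite (_ : 'C(4,0) = 1)%N; last by [].
 rewrite (_ : 'C(4,1) = 4)%N; last by [].
 rewrite (_ : 'C(4,2) = 6)%N; last by [].
 rewrite ?B0 ?B1 ?B2. by field. Qed.
Lemma B4 : bernoulli 4 = -1/30.
Proof. bstep.
rewrite (_ : 'C(5,0) = 1)%N; last by [].
 rewrite (_ : 'C(5,1) = 5)%N; last by [].
 rewrite (_ : 'C(5,2) = 10)%N; last by [].
 rewrite (_ : 'C(5,3) = 10)%N; last by [].
 rewrite ?B0 ?B1 ?B2 ?B3. by field. Qed.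
Lemma B5 : bernoulli 5 = 0.
Proof. bstep.
rewrite (_ : 'C(6,0) = 1)%N; last by [].
 rewrite (_ : 'C(6,1) = 6)%N; last by [].
 rewrite (_ : 'C(6,2) = 15)%N; last by [].
 rewrite (_ : 'C(6,3) = 20)%N; last by [].
 rewrite (_ : 'C(6,4) = 15)%N; last by [].
 rewrite ?B0 ?B1 ?B2 ?B3 ?B4. by field. Qed.
Lemma B6 : bernoulli 6 = 1/42.
Proof. bstep.
rewrite (_ : 'C(7,0) = 1)%N; last by [].
 rewrite (_ : 'C(7,1) = 7)%N; last by [].
 rewrite (_ : 'C(7,2) = 21)%N; last by [].
 rewrite (_ : 'C(7,3) = 35)%N; last by [].
 rewrite (_ : 'C(7,4) = 35)%N; last by [].
 rewrite (_ : 'C(7,5) = 21)%N; last by [].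
 rewrite ?B0 ?B1 ?B2 ?B3 ?B4 ?B5. by field. Qed.
Lemma B7 : bernoulli 7 = 0.
Proof. bstep.
rewrite (_ : 'C(8,0) = 1)%N; last by [].
 rewrite (_ : 'C(8,1) = 8)%N; last by [].
 rewrite (_ : 'C(8,2) = 28)%N; last by [].
 rewrite (_ : 'C(8,3) = 56)%N; last by [].
 rewrite (_ : 'C(8,4) = 70)%N; last by [].
 rewrite (_ : 'C(8,5) = 56)%N; last by [].
 rewrite (_ : 'C(8,6) = 28)%N; last by [].
 rewrite ?B0 ?B1 ?B2 ?B3 ?B4 ?B5 ?B6. by field. Qed.
Lemma bp1 x : bernpoly 1 x = x - 1/2.
Proof. rewrite /bernpoly !big_ord_recr big_ord0 /=.
rewrite (_ : 'C(1,0) = 1)%N; last by [].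
rewrite (_ : (1 - 0) = 1)%N; last by [].
rewrite (_ : 'C(1,1) = 1)%N; last by [].
rewrite (_ : (1 - 1) = 0)%N; last by [].
rewrite ?B0 ?B1. by field. Qed.
Lemma bp3 x : bernpoly 3 x = x^+3 - 3/2 * x^+2 + 1/2 * x.
Proof. rewrite /bernpoly !big_ord_recr big_ord0 /=.
rewrite (_ : 'C(3,0) = 1)%N; last by [].
rewrite (_ : (3 - 0) = 3)%N; last by [].
rewrite (_ : 'C(3,1) = 3)%N; last by [].
rewrite (_ : (3 - 1) = 2)%N; last by [].
rewrite (_ : 'C(3,2) = 3)%N; last by [].
rewrite (_ : (3 - 2) = 1)%N; last by [].
rewrite (_ : 'C(3,3) = 1)%N; last by [].
rewrite (_ : (3 - 3) = 0)%N; last by [].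
rewrite ?B0 ?B1 ?B2 ?B3. by field. Qed.
Lemma bp5 x : bernpoly 5 x = x^+5 - 5/2 * x^+4 + 5/3 * x^+3 - 1/6 * x.
Proof. rewrite /bernpoly !big_ord_recr big_ord0 /=.
rewrite (_ : 'C(5,0) = 1)%N; last by [].
rewrite (_ : (5 - 0) = 5)%N; last by [].
rewrite (_ : 'C(5,1) = 5)%N; last by [].
rewrite (_ : (5 - 1) = 4)%N; last by [].
rewrite (_ : 'C(5,2) = 10)%N; last by [].
rewrite (_ : (5 - 2) = 3)%N; last by [].
rewrite (_ : 'C(5,3) = 10)%N; last by [].
rewrite (_ : (5 - 3) = 2)%N; last by [].
rewrite (_ : 'C(5,4) = 5)%N; last by [].
rewrite (_ : (5 - 4) = 1)%N; last by [].
rewrite (_ : 'C(5,5) = 1)%N; last by [].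
rewrite (_ : (5 - 5) = 0)%N; last by [].
rewrite ?B0 ?B1 ?B2 ?B3 ?B4 ?B5. by field. Qed.
Lemma bp7 x : bernpoly 7 x = x^+7 - 7/2 * x^+6 + 7/2 * x^+5 - 7/6 * x^+3 + 1/6 * x.
Proof. rewrite /bernpoly !big_ord_recr big_ord0 /=.
rewrite (_ : 'C(7,0) = 1)%N; last by [].
rewrite (_ : (7 - 0) = 7)%N; last by [].
rewrite (_ : 'C(7,1) = 7)%N; last by [].
rewrite (_ : (7 - 1) = 6)%N; last by [].
rewrite (_ : 'C(7,2) = 21)%N; last by [].
rewrite (_ : (7 - 2) = 5)%N; last by [].
rewrite (_ : 'C(7,3) = 35)%N; last by [].
rewrite (_ : (7 - 3) = 4)%N; last by [].
rewrite (_ : 'C(7,4) = 35)%N; last by [].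
rewrite (_ : (7 - 4) = 3)%N; last by [].
rewrite (_ : 'C(7,5) = 21)%N; last by [].
rewrite (_ : (7 - 5) = 2)%N; last by [].
rewrite (_ : 'C(7,6) = 7)%N; last by [].
rewrite (_ : (7 - 6) = 1)%N; last by [].
rewrite (_ : 'C(7,7) = 1)%N; last by [].
rewrite (_ : (7 - 7) = 0)%N; last by [].
rewrite ?B0 ?B1 ?B2 ?B3 ?B4 ?B5 ?B6 ?B7. by field. Qed.
Notation T3 := (bool * bool * bool)%type.
Definition sg3 (e : T3) : int := sgnb e.1.1 * sgnb e.1.2 * sgnb e.2.
Definition rho3 p1 p2 p3 (e : T3) := chi_res p1 p2 p3 e.1.1 e.1.2 e.2.
Definition w3 (e : T3) : rat := - (sg3 e)%:~R.

Lemma hitE p1 p2 p3 s n : chi_hit p1 p2 p3 s n =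
  [exists e : T3, (sg3 e == s) && ((2 * PP p1 p2 p3)%N%:Z %| n - rho3 p1 p2 p3 e)%Z].
Proof.
apply/idP/idP.
  case/existsP=> e1 /existsP[e2 /existsP[e3 H]].
  by apply/existsP; exists (e1, e2, e3).
case/existsP=> [[[e1 e2] e3] H]; apply/existsP; exists e1.
by apply/existsP; exists e2; apply/existsP; exists e3.
Qed.

Lemma sg3_pm e : sg3 e = 1 \/ sg3 e = -1.
Proof. by case: e => [[[] []] []]; rewrite /sg3 /=; [left|right|right|left|right|left|left|right]. Qed.

Lemma chi_sum p1 p2 p3 (m : T3 -> nat) (f : nat -> rat) :
  (forall e, 0 < m e < 2 * PP p1 p2 p3)%N -> injective m ->
  (forall e, ((2 * PP p1 p2 p3)%N%:Z %| (m e)%:Z - rho3 p1 p2 p3 e)%Z) ->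
  \sum_(1 <= j < (2 * PP p1 p2 p3).+1) chi p1 p2 p3 j%:Z * f j =
  \sum_(e : T3) w3 e * f (m e).
Proof.
set N := (2 * PP p1 p2 p3)%N => mr minj md.
have key j e : (1 <= j <= N)%N ->
    ((N%:Z %| j%:Z - rho3 p1 p2 p3 e)%Z = (j == m e)).
  move=> /andP[j1 jN]; have /andP[m0 mN] := mr e.
  have /dvdzP[q1 Hq1] := md e.
  apply/idP/eqP => [/dvdzP[q2 Hq2]|->]; last exact: md.
  have H : (j%:Z - (m e)%:Z = (q2 - q1) * N%:Z)%R by rewrite mulrBl -Hq1 -Hq2; ring.
  clear Hq1 Hq2; move: H; move: (q2 - q1) => q H.
  have : (q <= -1)%R \/ q = 0 \/ (1 <= q)%R by lia.
  case=> [hq|[hq|hq]]; [nia|subst q; lia|nia].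
have chiE j : (1 <= j <= N)%N -> chi p1 p2 p3 j%:Z = \sum_(e : T3) (j == m e)%:R * w3 e.
  move=> Hj; rewrite /chi !hitE.
  case: (pickP (fun e => j == m e)) => [e He|none].
    rewrite (bigD1 e) //= He mul1r big1 ?addr0; last first.
      move=> e' ne'; case: eqP => [Hj'|]; last by rewrite mul0r.
      have : m e = m e' by rewrite -(eqP He) Hj'.
      by move/minj => Hee; rewrite Hee eqxx in ne'.
    have hit s : [exists e0, (sg3 e0 == s) && (N%:Z %| j%:Z - rho3 p1 p2 p3 e0)%Z] = (sg3 e == s).
      apply/existsP/idP => [[e0 /andP[/eqP <- Hd]]|Hs].
        by rewrite key // in Hd; move/eqP: He; rewrite (eqP Hd) => /minj ->.
      by exists e; rewrite Hs key.
    rewrite !hit /w3; case: (sg3_pm e) => ->; by [].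
  have hit s : [exists e0, (sg3 e0 == s) && (N%:Z %| j%:Z - rho3 p1 p2 p3 e0)%Z] = false.
    apply/existsP => -[e0 /andP[_ Hd]]; by rewrite key // none in Hd.
  rewrite !hit big1 // => e _; by rewrite none mul0r.
rewrite (eq_big_nat _ _ (F2 := fun j => (\sum_(e : T3) (j == m e)%:R * w3 e) * f j)); last first.
  by move=> j Hj; rewrite chiE.
under eq_bigr do rewrite mulr_suml.
rewrite exchange_big /=; apply: eq_bigr => e _.
under eq_bigr do rewrite -mulrA mulr_natl mulrb.
rewrite -big_mkcond big_nat1_eq.
have /andP[m0 mN] := mr e.
by rewrite m0 /= ltnS ltnW.
Qed.
Lemma saw_frac (x : rat) (n : int) : n%:~R < x -> x < (n + 1)%:~R ->
  sawtooth x = x - n%:~R - 1 / 2.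
Proof.
move=> h1 h2; rewrite /sawtooth.
have fl : Num.floor x = n by apply: floor_def; rewrite (ltW h1) h2.
by rewrite intrEfloor fl (lt_eqF h1).
Qed.

Lemma saw_int (x : rat) (n : int) : x = n%:~R -> sawtooth x = 0.
Proof. by move=> ->; rewrite /sawtooth intr_int. Qed.

Lemma d1 : dedekind_sum (3 * 5) 2 = 0.
Proof. rewrite /dedekind_sum big_ltn // big_geq //. Qed.
Lemma d2 : dedekind_sum (2 * 5) 3 = 1/18.
Proof. rewrite /dedekind_sum big_ltn // big_ltn // big_geq //. Qed.
Lemma d3 : dedekind_sum (2 * 3) 5 = 1/5.
Proof. rewrite /dedekind_sum big_ltn // big_ltn // big_ltn // big_ltn // big_geq //. Qed.
Lemma phi235 : phi 2 3 5 = 181 / 30.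
Proof. rewrite /phi d1 d2 d3 /PP. by field. Qed.

Lemma sumT3 (F : T3 -> rat) : \sum_(e : T3) F e =
  F (true,true,true) + F (true,true,false) + F (true,false,true) + F (true,false,false)
  + F (false,true,true) + F (false,true,false) + F (false,false,true) + F (false,false,false).
Proof.
rewrite (eq_bigr (fun e : T3 => F (e.1, e.2))); last by move=> [a c].
rewrite -(pair_bigA _ (fun (a : bool * bool) (c : bool) => F (a, c))) /=.
rewrite (eq_bigr (fun a : bool * bool => \sum_(c : bool) F (a.1, a.2, c))); last by move=> [a b].
rewrite -(pair_bigA _ (fun (a b : bool) => \sum_(c : bool) F (a, b, c))) /=.
rewrite !big_bool /=; ring.
Qed.

Definition xe (y1 y2 y3 : rat) (e : T3) : rat :=
  1/2 + (sgnb e.1.1)%:~R * y1 + (sgnb e.1.2)%:~R * y2 + (sgnb e.2)%:~R * y3.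

Lemma S1 y1 y2 y3 : \sum_(e : T3) w3 e * bernpoly 1 (xe y1 y2 y3 e) = 0.
Proof. rewrite sumT3 /w3 /xe /sg3 /= !bp1. by field. Qed.
Lemma S3 y1 y2 y3 : \sum_(e : T3) w3 e * bernpoly 3 (xe y1 y2 y3 e) = -48 * y1 * y2 * y3.
Proof. rewrite sumT3 /w3 /xe /sg3 /= !bp3. by field. Qed.
Lemma S5 y1 y2 y3 : \sum_(e : T3) w3 e * bernpoly 5 (xe y1 y2 y3 e) =
  y1 * y2 * y3 * (40 - 160 * (y1^+2 + y2^+2 + y3^+2)).
Proof. rewrite sumT3 /w3 /xe /sg3 /= !bp5. by field. Qed.
Lemma S7 y1 y2 y3 : \sum_(e : T3) w3 e * bernpoly 7 (xe y1 y2 y3 e) =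
  y1 * y2 * y3 * (-49 + 280 * (y1^+2 + y2^+2 + y3^+2) - 336 * (y1^+4 + y2^+4 + y3^+4)
     - 1120 * (y1^+2 * y2^+2 + y1^+2 * y3^+2 + y2^+2 * y3^+2)).
Proof. rewrite sumT3 /w3 /xe /sg3 /= !bp7. by field. Qed.
Section Gen.
Variables (p1 p2 p3 : nat).
Hypotheses (h1 : (0 < p1)%N) (h2 : (0 < p2)%N) (h3 : (0 < p3)%N)
  (c12 : coprime p1 p2) (c13 : coprime p1 p3) (c23 : coprime p2 p3)
  (hs : 1 / p1%:R + 1 / p2%:R + 1 / p3%:R < 1 :> rat).

Let hp1 : (p1%:R : rat) != 0. Proof. by rewrite pnatr_eq0 -lt0n. Qed.
Let hp2 : (p2%:R : rat) != 0. Proof. by rewrite pnatr_eq0 -lt0n. Qed.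
Let hp3 : (p3%:R : rat) != 0. Proof. by rewrite pnatr_eq0 -lt0n. Qed.

Lemma sum_lt : (p2 * p3 + p1 * p3 + p1 * p2 < p1 * p2 * p3)%N.
Proof.
rewrite -(ltr_nat rat).
have -> : ((p2 * p3 + p1 * p3 + p1 * p2)%N%:R : rat) =
   (p1 * p2 * p3)%N%:R * (1 / p1%:R + 1 / p2%:R + 1 / p3%:R).
  rewrite !natrD !natrM. field. by rewrite hp1 hp2 hp3.
apply: (@lt_le_trans _ _ ((p1 * p2 * p3)%N%:R * 1)); last by rewrite mulr1.
by rewrite ltr_pM2l // ltr0n !muln_gt0 h1 h2 h3.
Qed.

Lemma p_ne1 : [/\ p1 != 1, p2 != 1 & p3 != 1]%N.
Proof.
have X := sum_lt; split; apply/eqP => E; rewrite E in X; nia.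
Qed.

Lemma abc_ne : ((p2 * p3 != p1 * p3) /\ (p2 * p3 != p1 * p2) /\ (p1 * p3 != p1 * p2) /\
  (p2 * p3 != p1 * p3 + p1 * p2) /\ (p1 * p3 != p2 * p3 + p1 * p2) /\ (p1 * p2 != p2 * p3 + p1 * p3))%N.
Proof.
have [n1 n2 n3] := p_ne1.
have nn : forall p, (p != 1 -> ~~ coprime p p)%N by move=> p; rewrite /coprime gcdnn.
have cnd : forall p q r, (p %| q * r -> coprime p q -> coprime p r -> p = 1)%N.
  move=> p q r d cq cr; have : coprime p p by apply: (coprime_dvdr d); rewrite coprimeMr cq cr.
  by rewrite /coprime gcdnn => /eqP.
split; [|split; [|split; [|split; [|split]]]]; apply/eqP => E.
- have : p2 = p1 by apply/eqP; rewrite -(eqn_pmul2r h3) E.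
  by move=> e; move: c12 n1; rewrite e /coprime gcdnn => /eqP ->.
- have : p3 = p1 by apply/eqP; rewrite -(eqn_pmul2l h2) E mulnC.
  by move=> e; move: c13 n1; rewrite e /coprime gcdnn => /eqP ->.
- have : p3 = p2 by apply/eqP; rewrite -(eqn_pmul2l h1) E.
  by move=> e; move: c23 n2; rewrite e /coprime gcdnn => /eqP ->.
- have d : (p1 %| p2 * p3)%N by rewrite E -mulnDr dvdn_mulr.
  by move: n1; rewrite (cnd _ _ _ d c12 c13).
- have d : (p2 %| p1 * p3)%N by rewrite E [(p1 * p2)%N]mulnC -mulnDr dvdn_mulr.
  have c21 : coprime p2 p1 by rewrite coprime_sym.
  by move: n2; rewrite (cnd _ _ _ d c21 c23).
- have d : (p3 %| p1 * p2)%N by rewrite E -mulnDl dvdn_mull.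
  have c31 : coprime p3 p1 by rewrite coprime_sym.
  have c32 : coprime p3 p2 by rewrite coprime_sym.
  by move: n3; rewrite (cnd _ _ _ d c31 c32).
Qed.

Lemma div1 : (PP p1 p2 p3 %/ p1 = p2 * p3)%N.
Proof. by rewrite /PP -mulnA mulKn. Qed.
Lemma div2 : (PP p1 p2 p3 %/ p2 = p1 * p3)%N.
Proof. by rewrite /PP (mulnC p1) -mulnA mulKn. Qed.
Lemma div3 : (PP p1 p2 p3 %/ p3 = p1 * p2)%N.
Proof. by rewrite /PP mulnK. Qed.

Lemma rho_eq e : rho3 p1 p2 p3 e = (PP p1 p2 p3)%:Z + sgnb e.1.1 * (p2 * p3)%N%:Z
  + sgnb e.1.2 * (p1 * p3)%N%:Z + sgnb e.2 * (p1 * p2)%N%:Z.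
Proof. by rewrite /rho3 /chi_res div1 div2 div3. Qed.

Lemma rho_bounds e : (0 < rho3 p1 p2 p3 e)%R /\ (rho3 p1 p2 p3 e < (2 * PP p1 p2 p3)%N%:Z)%R.
Proof.
have X := sum_lt; rewrite rho_eq /PP.
move: (p2 * p3)%N (p1 * p3)%N (p1 * p2)%N (p1 * p2 * p3)%N X => a b c P X.
by move: e => [[[] []] []] /=; lia.
Qed.

Lemma rho_inj : injective (fun e => absz (rho3 p1 p2 p3 e)).
Proof.
have X := sum_lt; have [n1 [n2 [n3 [n4 [n5 n6]]]]] := abc_ne.
have B := rho_bounds.
have q1 : (0 < p2 * p3)%N by rewrite muln_gt0 h2 h3.
have q2 : (0 < p1 * p3)%N by rewrite muln_gt0 h1 h3.
have q3 : (0 < p1 * p2)%N by rewrite muln_gt0 h1 h2.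
move=> e e'; have [B1 B2] := B e; have [B3 B4] := B e'; move: B1 B2 B3 B4.
rewrite /= !rho_eq /PP.
move: (p2 * p3)%N (p1 * p3)%N (p1 * p2)%N (p1 * p2 * p3)%N X n1 n2 n3 n4 n5 n6 q1 q2 q3 => a b c P X n1 n2 n3 n4 n5 n6 q1 q2 q3.
by move: e e' => [[[] []] []] [[[] []] []] /= B1 B2 B3 B4 H //; exfalso; lia.
Qed.

Definition yy (p : nat) : rat := 1 / (2 * p%:R).

Lemma Lneg_gen k : Lneg p1 p2 p3 k = - ((2 * PP p1 p2 p3)%N%:R ^+ (2 * k)) / (2 * k + 1)%N%:R *
  \sum_(e : T3) w3 e * bernpoly (2 * k + 1) (xe (yy p1) (yy p2) (yy p3) e).
Proof.
rewrite /Lneg (@chi_sum p1 p2 p3 (fun e => absz (rho3 p1 p2 p3 e))).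
- congr (_ * _); apply: eq_bigr => e _; congr (_ * bernpoly _ _).
  have [B1 _] := rho_bounds e.
  rewrite natr_absz ger0_norm ?ltW // rho_eq /xe /yy /PP !intrD !intrM -!pmulrn !natrM.
  field. by rewrite hp1 hp2 hp3.
- move=> e; have [B1 B2] := rho_bounds e; apply/andP; split; lia.
- exact: rho_inj.
- move=> e; have [B1 _] := rho_bounds e.
  by rewrite gez0_abs ?ltW // subrr dvdz0.
Qed.

Definition cgen (k : nat) : rat := 1 / 2 * Lneg p1 p2 p3 k / (k`!)%:R / ((4 * PP p1 p2 p3)%N%:R ^+ k).

Lemma c0 : cgen 0 = 0.
Proof. by rewrite /cgen Lneg_gen (_ : (2 * 0 + 1 = 1)%N) // S1 !mulr0 !mul0r. Qed.

Lemma gen_main : (exists lam : fps, is_tau_hyp p1 p2 p3 lam) /\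
     (forall lam : fps, is_tau_hyp p1 p2 p3 lam -> lam_values p1 p2 p3 lam).
Proof.
split.
  apply: tau_exists; have [-> _ _ _] := r_vals cgen; exact: c0.
move=> lam H; have [l0 l1 l2] := @tau_unique _ _ _ H.
have [_ r1 r2 r3] := r_vals cgen.
rewrite /lam_values l2 l1 l0 r1 r2 r3 /cgen !Lneg_gen.
rewrite (_ : (2 * 1 + 1 = 3)%N) // (_ : (2 * 2 + 1 = 5)%N) // (_ : (2 * 3 + 1 = 7)%N) //.
rewrite S3 S5 S7 (_ : (1`! = 1)%N) // (_ : (2`! = 2)%N) // (_ : (3`! = 6)%N) //.
rewrite /yy /PP !natrM.
split.
- field. by rewrite hp1 hp2 hp3.
- field. by rewrite hp1 hp2 hp3.
- field. by rewrite hp1 hp2 hp3.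
Qed.
End Gen.
Tactic Notation "rwn" constr(e) := rewrite (_ : e); last by [].

Definition m235 (e : T3) : nat :=
  match e with
  | (true, true, true) => 1 | (true, true, false) => 49
  | (true, false, true) => 41 | (true, false, false) => 29
  | (false, true, true) => 31 | (false, true, false) => 19
  | (false, false, true) => 11 | (false, false, false) => 59
  end.

Lemma L235 k : Lneg 2 3 5 k = - (60%:R ^+ (2 * k)) / (2 * k + 1)%N%:R *
  \sum_(e : T3) w3 e * bernpoly (2 * k + 1) ((m235 e)%:R / 60%:R).
Proof.
rewrite /Lneg (@chi_sum 2 3 5 m235).
- rewrite (_ : (2 * PP 2 3 5 = 60)%N); last by []. reflexivity.
- by move=> [[[] []] []].
- by move=> [[[] []] []] [[[] []] []].
- by move=> [[[] []] []].
Qed.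

Lemma q3 a : qpow a 3 = a * (a - 1) * (a - 2) / 6.
Proof. rewrite /qpow !big_ord_recr big_ord0 /= (_ : (3`! = 6)%N) //. by field. Qed.

Definition c235 (k : nat) : rat := 1 / 2 * Lneg 2 3 5 k / (k`!)%:R / (120 ^+ k).

Lemma main235 : (exists lam : fps, is_tau_235 lam) /\
   (forall lam : fps, is_tau_235 lam -> lam_values 2 3 5 lam).
Proof.
have S k : \sum_(e : T3) w3 e * bernpoly (2 * k + 1) ((m235 e)%:R / 60%:R) =
   \sum_(e : T3) w3 e * bernpoly (2 * k + 1) ((m235 e)%:R / 60%:R) by [].
split.
  apply: tau_exists; rewrite q0 /fps_subst big_ord_recr big_ord0 /= add0r mulr1.
  rewrite L235 (_ : (2 * 0 + 1 = 1)%N) // sumT3 /w3 /sg3 /= !bp1.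
  rwn (2 * 0 = 0)%N; rwn (0`! = 1)%N; rewrite !expr0. by field.
move=> lam H; have [l0 l1 l2] := @tau_unique _ _ _ H.
have [_ r1 r2 r3] := r_vals c235.
rewrite /lam_values l2 l1 l0 /= r1 r2 r3 q1 q2 q3 phi235 /c235 !L235.
rwn (2 * 1 + 1 = 3)%N; rwn (2 * 2 + 1 = 5)%N; rwn (2 * 3 + 1 = 7)%N.
rwn (2 * 1 = 2)%N; rwn (2 * 2 = 4)%N; rwn (2 * 3 = 6)%N.
rwn (1`! = 1)%N; rwn (2`! = 2)%N; rwn (3`! = 6)%N.
rewrite !sumT3 /w3 /sg3 /= !bp3 !bp5 !bp7 /PP.
split.
- by field.
- by field.
- by field.
Qed.

Theorem mainTheorem7 :
  (forall p1 p2 p3 : nat,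
     (0 < p1)%N -> (0 < p2)%N -> (0 < p3)%N ->
     coprime p1 p2 -> coprime p1 p3 -> coprime p2 p3 ->
     1 / p1%:R + 1 / p2%:R + 1 / p3%:R < 1 :> rat ->
     (exists lam : fps, is_tau_hyp p1 p2 p3 lam) /\
     (forall lam : fps, is_tau_hyp p1 p2 p3 lam -> lam_values p1 p2 p3 lam))
  /\
  ((exists lam : fps, is_tau_235 lam) /\
   (forall lam : fps, is_tau_235 lam -> lam_values 2 3 5 lam)).
Proof.
split; last exact: main235.
move=> p1 p2 p3 h1 h2 h3 c12 c13 c23 hs.
exact: gen_main.
Qed.
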